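(* Let $(X,\|\cdot,\cdot\|)$ be a linear 2-normed space and let $E$ be a nonempty (sequentially) closed and bounded subset of $X$. Let $T:E\to E$ be a contraction. Then $T$ has a unique fixed point in $E$.
   Context: A linear 2-normed space is a real linear space $X$ of dimension greater than 1 with a function $\|\cdot,\cdot\|:X\times X\to\mathbb{R}$ such that: $\|x,y\|=0$ iff $x,y$ are linearly dependent; $\|x,y\|=\|y,x\|$; $\|\alpha x,y\|=|\alpha|\,\|x,y\|$; $\|x+y,z\|\le\|x,z\|+\|y,z\|$. A sequence $x_n\to x$ means $\|x_n-x,z\|\to0$ for every $z\in X$. $\overline{E}=\{x\in X:$ some sequence in $E$ converges to $x\}$, and $E$ is (sequentially) closed if $E=\overline{E}$. For $e\in E$, $E$ is $e$-bounded if there is $M>0$ with $\|x,e\|\le M$ for all $x\in E$; $E$ is bounded if it is $e$-bounded for every $e\in E$. $T:E\to E$ is a contraction if there exists $k\in(0,1)$ with $\|Tx-Ty,z\|\le k\|x-y,z\|$ for all $x,y\in E$ and all $z\in X$. *)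

(* Defs.v *)
From HB Require Import structures.
From mathcomp Require Import all_boot all_order all_algebra.
From mathcomp Require Import all_classical all_reals all_analysis.
Set Implicit Arguments. Unset Strict Implicit. Unset Printing Implicit Defensive.
Import Order.TTheory GRing.Theory Num.Theory.
Import numFieldNormedType.Exports.
Local Open Scope ring_scope.
Local Open Scope classical_set_scope.

Definition lin_dep (R : realType) (X : lmodType R) (x y : X) : Prop :=
  exists a b : R, (a != 0 \/ b != 0) /\ a *: x + b *: y = 0.

Definition is_2normed_space (R : realType) (X : lmodType R)
    (N : X -> X -> R) : Prop :=
  (exists x y : X, ~ lin_dep x y) /\
  (forall x y, N x y = 0 <-> lin_dep x y) /\
  (forall x y, N x y = N y x) /\
  (forall (a : R) x y, N (a *: x) y = `|a| * N x y) /\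
  (forall x y z, N (x + y) z <= N x z + N y z).

Definition conv2 (R : realType) (X : lmodType R) (N : X -> X -> R)
    (u : nat -> X) (x : X) : Prop :=
  forall z : X, (fun n => N (u n - x) z) @ \oo --> (0 : R).

Definition seq_closure (R : realType) (X : lmodType R) (N : X -> X -> R)
    (E : set X) : set X :=
  [set x | exists u : nat -> X, (forall n, E (u n)) /\ conv2 N u x].

Definition seq_closed (R : realType) (X : lmodType R) (N : X -> X -> R)
    (E : set X) : Prop := E = seq_closure N E.

Definition e_bounded (R : realType) (X : lmodType R) (N : X -> X -> R)
    (E : set X) (e : X) : Prop :=
  exists M : R, 0 < M /\ forall x, E x -> N x e <= M.

Definition bounded2 (R : realType) (X : lmodType R) (N : X -> X -> R)
    (E : set X) : Prop := forall e, E e -> e_bounded N E e.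

Definition contraction2 (R : realType) (X : lmodType R) (N : X -> X -> R)
    (E : set X) (T : X -> X) : Prop :=
  exists k : R, 0 < k /\ k < 1 /\
    forall x y, E x -> E y -> forall z, N (T x - T y) z <= k * N (x - y) z.

(* Main.v *)
Require Import Defs.
From HB Require Import structures.
From mathcomp Require Import all_boot all_order all_algebra.
From mathcomp Require Import all_classical all_reals all_analysis.
From mathcomp Require Import lra.
Import Order.TTheory GRing.Theory Num.Theory.
Import numFieldNormedType.Exports.
Local Open Scope ring_scope.
Local Open Scope classical_set_scope.

Section Aux.
Set Implicit Arguments. Unset Strict Implicit.
Variables (R : realType) (X : lmodType R) (N : X -> X -> R).
Hypothesis hN : is_2normed_space N.

Lemma N0l z : N 0 z = 0.
Proof.
case: hN => _ [_ [_ [hZ _]]].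
by rewrite -(scale0r z) hZ normr0 mul0r.
Qed.

Lemma NNl x z : N (- x) z = N x z.
Proof.
case: hN => _ [_ [_ [hZ _]]].
by rewrite -scaleN1r hZ normrN normr1 mul1r.
Qed.

Lemma Nge0 x z : 0 <= N x z.
Proof.
case: hN => _ [_ [_ [_ hT]]].
have h := hT x (- x) z; rewrite NNl subrr N0l in h; lra.
Qed.

Lemma zero_of u : (forall z, N u z = 0) -> u = 0.
Proof.
case: hN => [[a [b hab]] [h0 _]] hu.
have [al [be [hne hab0]]] := (h0 u a).1 (hu a).
have [al' [be' [hne' hab0']]] := (h0 u b).1 (hu b).
have hal : al != 0.
  apply/negP => /eqP E; subst al; case: hne => [|hb]; first by rewrite eqxx.
  apply: hab; exists 1, 0; split; first by left; exact: oner_neq0.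
  move: hab0; rewrite scale0r add0r => /eqP; rewrite scaler_eq0 (negbTE hb) /= => /eqP ->.
  by rewrite ?(scale1r, scale0r, scaler0, addr0, add0r).
have hal' : al' != 0.
  apply/negP => /eqP E; subst al'; case: hne' => [|hb]; first by rewrite eqxx.
  apply: hab; exists 0, 1; split; first by right; exact: oner_neq0.
  move: hab0'; rewrite scale0r add0r => /eqP; rewrite scaler_eq0 (negbTE hb) /= => /eqP ->.
  by rewrite ?(scale1r, scale0r, scaler0, addr0, add0r).
have Eu : u = (- (be / al)) *: a.
  apply: (scalerI hal); rewrite scalerA mulrN mulrCA mulfV // mulr1 scaleNr.
  by apply/eqP; rewrite -subr_eq0 opprK ?hab0 ?hab0'.
have Eu' : u = (- (be' / al')) *: b.
  apply: (scalerI hal'); rewrite scalerA mulrN mulrCA mulfV // mulr1 scaleNr.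
  by apply/eqP; rewrite -subr_eq0 opprK ?hab0 ?hab0'.
case: (eqVneq (be / al) 0) => hc.
  by rewrite Eu hc oppr0 scale0r.
exfalso; apply: hab; exists (- (be / al)), (be' / al'); split.
  by left; rewrite oppr_eq0.
by rewrite -Eu -[X in _ + X]opprK -scaleNr -Eu' subrr.
Qed.

Lemma dep_line (d d0 : X) : d0 != 0 -> lin_dep d d0 -> exists c, d = c *: d0.
Proof.
move=> hd0 [al [be [hne hab0]]].
have hal : al != 0.
  apply/negP => /eqP E; subst al; case: hne => [|hb]; first by rewrite eqxx.
  move: hab0; rewrite scale0r add0r => /eqP; rewrite scaler_eq0 (negbTE hb) /=.
  by rewrite (negbTE hd0).
exists (- (be / al)).
apply: (scalerI hal); rewrite scalerA mulrN mulrCA mulfV // mulr1 scaleNr.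
by apply/eqP; rewrite -subr_eq0 opprK ?hab0 ?hab0'.
Qed.

Lemma exists_pos (d0 : X) : d0 != 0 -> exists z, 0 < N d0 z.
Proof.
move=> hd0; apply: contrapT => hn.
move/eqP: hd0; apply; apply: zero_of => z.
apply/eqP; rewrite eq_le Nge0 andbT; apply: contrapT => h.
by apply: hn; exists z; rewrite ltNge; apply/negP.
Qed.

End Aux.

Theorem lemma3p10 (R : realType) (X : lmodType R) (N : X -> X -> R)
  (hN : is_2normed_space N) (E : set X) (hne : E !=set0)
  (hcl : seq_closed N E) (hbd : bounded2 N E)
  (T : X -> X) (hTE : forall x, E x -> E (T x))
  (hT : contraction2 N E T) :
  exists x, E x /\ T x = x /\ (forall y, E y -> T y = y -> y = x).
Proof.
case: hT => k [k0 [k1 hk]].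
case: hne => x0 Ex0.
have h := hN; case: h => [[a [b hab]] [hN0 [hNs [hNZ hNt]]]].
pose x := fun n => iter n T x0.
have Ex : forall n, E (x n) by elim => [|n IH] //=; apply: hTE.
have uniq : forall p q, E p -> E q -> T p = p -> T q = q -> p = q.
  move=> p q Ep Eq Tp Tq; apply/eqP; rewrite -subr_eq0; apply/eqP.
  apply: (zero_of hN) => z.
  have := hk _ _ Ep Eq z; rewrite Tp Tq => h.
  have := Nge0 hN (p - q) z => h'.
  apply/eqP; rewrite eq_le h' andbT; nra.
suff [xs [Exs Txs]] : exists xs, E xs /\ T xs = xs.
  exists xs; split => //; split => // y Ey Ty; exact: uniq.
case: (eqVneq (T x0 - x0) 0) => hd0.
  exists x0; split => //; apply/eqP; by rewrite -subr_eq0 hd0.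
set d0 := T x0 - x0 in hd0.
have [z0 hz0] := exists_pos hN hd0.
have Nd0 : N d0 d0 = 0.
  apply/hN0; exists 1, (-1); split; first by left; exact: oner_neq0.
  by rewrite scale1r scaleN1r subrr.
have step : forall n, exists c, x n.+1 - x n = c *: d0 /\ `|c| <= k ^+ n.
  elim => [|n [c [hc hcb]]].
    by exists 1; split; [rewrite scale1r | rewrite expr0 normr1].
  have hdep : lin_dep (x n.+2 - x n.+1) d0.
    apply/hN0; apply/eqP; rewrite eq_le Nge0 // andbT.
    have := hk _ _ (Ex n.+1) (Ex n) d0.
    change (T (x n.+1)) with (x n.+2); change (T (x n)) with (x n.+1).
    by rewrite hc hNZ Nd0 mulr0 mulr0.
  have [c' hc'] := dep_line hd0 hdep.
  exists c'; split => //.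
  have h2 := hk _ _ (Ex n.+1) (Ex n) z0.
  change (T (x n.+1)) with (x n.+2) in h2; change (T (x n)) with (x n.+1) in h2.
  rewrite hc' hc !hNZ in h2.
  have h3 : `|c'| * N d0 z0 <= k ^+ n.+1 * N d0 z0.
    apply: (le_trans h2); rewrite mulrA exprS ler_wpM2r ?(ltW hz0) //.
    by rewrite ler_wpM2l // ltW.
  by rewrite ler_pM2r in h3.
have [c hc] := choice step.
pose t := series c.
have hx : forall n, x n = x0 + t n *: d0.
  elim => [|n IH].
    by rewrite /t /series /= big_geq // scale0r addr0.
  have e : x n.+1 = x n + c n *: d0 by rewrite -(hc n).1 addrC subrK.
  by rewrite e IH /t seriesSr scalerDl addrA.
have ct : cvgn t.
  apply: normed_cvg.
  apply: (@series_le_cvg _ _ (geometric 1 k)).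
  - by move=> n; exact: normr_ge0.
  - by move=> n; rewrite /geometric /= mul1r exprn_ge0 // ltW.
  - by move=> n; rewrite /geometric /= mul1r; exact: (hc n).2.
  - by apply: is_cvg_geometric_series; rewrite ger0_norm // ltW.
pose l := limn t.
have tl : t @ \oo --> l by exact: ct.
pose xs := x0 + l *: d0.
have tl0 : (fun n => `|t n - l|) @ \oo --> (0 : R).
  apply/norm_cvg0P; rewrite -(subrr l); apply: cvgB => //; exact: cvg_cst.
have key : forall z, (fun n => N (x n - xs) z) @ \oo --> (0 : R).
  move=> z.
  have -> : (fun n => N (x n - xs) z) = (fun n => `|t n - l| * N d0 z).
    apply: funext => n; rewrite hx /xs opprD addrACA subrr add0r -scalerBl hNZ //.
  rewrite -(mul0r (N d0 z)); exact: cvgMr_tmp.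
have Exs : E xs.
  rewrite hcl; exists x; split => //; exact: key.
exists xs; split => //.
apply/eqP; rewrite -subr_eq0; apply/eqP; apply: (zero_of hN) => z.
apply/eqP; rewrite eq_le Nge0 // andbT.
have bnd : forall n, N (T xs - xs) z <= k * N (x n - xs) z + N (x n.+1 - xs) z.
  move=> n; have := hNt (T xs - x n.+1) (x n.+1 - xs) z.
  rewrite [_ + (_ - xs)]addrA subrK.
  have := hk _ _ Exs (Ex n) z.
  change (T (x n)) with (x n.+1).
  move=> h1 h2.
  have e1 : N (xs - x n) z = N (x n - xs) z by rewrite -opprB NNl.
  rewrite e1 in h1; lra.
have lim0 : (fun n => k * N (x n - xs) z + N (x n.+1 - xs) z) @ \oo --> (0 : R).
  rewrite -[0 : R]addr0 -{1}(mulr0 k).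
  apply: cvgD; first exact: cvgMl_tmp.
  have := key z; rewrite -cvg_shiftS; exact.
have hle : N (T xs - xs) z <= lim ((fun n => k * N (x n - xs) z + N (x n.+1 - xs) z) @ \oo).
  apply: limr_ge; first exact: (cvgP _ lim0).
  by apply: nearW => n; exact: bnd.
by rewrite (cvg_lim _ lim0) in hle.
Qed.
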